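(* Let $r>0$ and let $S$ be a finite set of sites in $\mathbb{H}^2$ with pairwise hyperbolic distance at least $2r$. Then every inner vertex of the Delaunay complex $\mathcal{D}(S)$ (i.e., every site whose Voronoi cell is bounded) has degree at least $e^r$ in $\mathcal{D}(S)$.
   Context: $\mathbb{H}^2$ is the hyperbolic plane of curvature $-1$. For a finite $S\subset\mathbb{H}^2$, the Voronoi cell of $s\in S$ is the set of points of $\mathbb{H}^2$ closer to $s$ than to any other site. The Delaunay complex $\mathcal{D}(S)$ is the graph on $S$ in which two sites are adjacent iff their Voronoi cells share a boundary segment of positive length (a Voronoi edge); it is a plane graph when each edge is drawn through a point of the shared Voronoi edge, and a site is an outer vertex (lies on the unbounded face) iff its Voronoi cell is unbounded. *)

(* Defs.v *)
(* concrete reals R. Upper half-plane model of H^2 (curvature -1). *)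
From Stdlib Require Import Reals List.
Open Scope R_scope.

Definition pt : Type := (R * R)%type.

Definition inH (p : pt) : Prop := 0 < snd p.

(* hyperbolic distance: arcosh(1 + |p-q|^2 / (2 y_p y_q)), arcosh c = ln (c + sqrt(c^2-1)) *)
Definition hdist (p q : pt) : R :=
  let c := 1 + ((fst p - fst q) ^ 2 + (snd p - snd q) ^ 2) / (2 * snd p * snd q) in
  ln (c + sqrt (c * c - 1)).

Definition voronoi (S : list pt) (s : pt) (x : pt) : Prop :=
  inH x /\ forall t, In t S -> t <> s -> hdist x s < hdist x t.

Definition hclosure (A : pt -> Prop) (x : pt) : Prop :=
  inH x /\ forall eps, 0 < eps -> exists y, A y /\ hdist x y < eps.

Definition hsegment (a b z : pt) : Prop :=
  inH z /\ hdist a z + hdist z b = hdist a b.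

(* Delaunay adjacency: the Voronoi cells of s and t share a boundary segment of positive length *)
Definition delaunay_adj (S : list pt) (s t : pt) : Prop :=
  s <> t /\
  exists a b, inH a /\ inH b /\ a <> b /\
    forall z, hsegment a b z ->
      hclosure (voronoi S s) z /\ hclosure (voronoi S t) z.

Definition bounded_cell (S : list pt) (s : pt) : Prop :=
  exists M, forall x, voronoi S s x -> hdist s x <= M.

(* Main.v *)
Require Import Defs.
From Stdlib Require Import Reals List Lra Lia Psatz Classical.
Open Scope R_scope.



Definition hdc (c : R) := ln (c + sqrt (c*c - 1)).

Lemma sq_pos c : 1 <= c -> 0 <= c*c - 1.
Proof. intros; nra. Qed.

Lemma hd_exp c : 1 <= c -> exp (hdc c) = c + sqrt (c*c - 1).
Proof. intros. unfold hdc. rewrite exp_ln; auto. pose proof (sqrt_pos (c*c-1)); lra. Qed.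

Lemma hd_mono c1 c2 : 1 <= c1 -> c1 < c2 -> hdc c1 < hdc c2.
Proof. intros. unfold hdc. apply ln_increasing. pose proof (sqrt_pos (c1*c1-1)); lra.
 pose proof (sqrt_le_1_alt (c1*c1-1) (c2*c2-1)). assert (c1*c1-1 <= c2*c2-1) by nra. lra. Qed.

Lemma hd_lt_iff c1 c2 : 1 <= c1 -> 1 <= c2 -> (hdc c1 < hdc c2 <-> c1 < c2).
Proof. intros; split; intros.
 destruct (Rlt_or_le c1 c2); auto. destruct (Req_dec c1 c2). subst; lra.
 assert (c2 < c1) by lra. pose proof (hd_mono c2 c1 H0 H4). lra.
 apply hd_mono; auto. Qed.

Lemma hd_le_M c M : 1 <= c -> hdc c <= M -> c <= exp M.
Proof. intros. pose proof (hd_exp c H). assert (exp (hdc c) <= exp M).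
 destruct (Req_dec (hdc c) M). rewrite H2; lra. left; apply exp_increasing; lra.
 pose proof (sqrt_pos (c*c-1)); lra. Qed.

Lemma hd_ge_2r c r : 0 < r -> 1 <= c -> 2*r <= hdc c -> (exp (2*r) + / exp (2*r)) / 2 <= c.
Proof. intros Hr H H0. pose proof (hd_exp c H). set (q := exp (2*r)).
 assert (q <= c + sqrt (c*c-1)). { unfold q. rewrite <- H1. destruct (Req_dec (2*r) (hdc c)). rewrite H2; lra. left; apply exp_increasing; lra. }
 assert (Hs: sqrt (c*c-1) * sqrt (c*c-1) = c*c-1) by (apply sqrt_sqrt; nra).
 pose proof (sqrt_pos (c*c-1)).
 assert (1 < q). { unfold q. pose proof (exp_increasing 0 (2*r)). rewrite exp_0 in H4. apply H4; lra. }
 set (e := c + sqrt (c*c-1)) in *.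
 assert (e * (c - sqrt (c*c-1)) = 1) by (unfold e; nra).
 assert (q * / q = 1) by (field; lra). assert (0 < /q) by (apply Rinv_0_lt_compat; lra).
 set (qi := / q) in *.
 set (ei := c - sqrt (c*c-1)) in *. assert (c = (e + ei)/2) by (unfold e, ei; lra). rewrite H8.
 assert (0 < ei) by nra. assert (qi*ei <= 1) by nra.
 assert (qi - ei = (e - q) * qi * ei) by nra.
 assert (0 <= (e - q) * (1 - qi*ei)) by (apply Rmult_le_pos; lra). nra.
Qed.

Definition dl (eps : R) := Rmin 1 ((exp eps - 1)^2/16).

Lemma hd_small c eps : 1 <= c -> 0 < eps -> c < 1 + dl eps -> hdc c < eps.
Proof. intros. unfold hdc. rewrite <- (ln_exp eps). apply ln_increasing.
 pose proof (sqrt_pos (c*c-1)); lra.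
 assert (1 < exp eps). { pose proof (exp_increasing 0 eps). rewrite exp_0 in H2. apply H2; lra. }
 set (g := exp eps - 1) in *. assert (exp eps = 1 + g) by (unfold g; lra). rewrite H3.
 unfold dl in H1. fold g in H1.
 assert (Hs: sqrt (c*c-1) * sqrt (c*c-1) = c*c-1) by (apply sqrt_sqrt; nra).
 pose proof (sqrt_pos (c*c-1)). set (q := sqrt (c*c-1)) in *.
 assert (c - 1 < 1) by (pose proof (Rmin_l 1 (g^2/16)); lra).
 assert (c - 1 < g^2/16) by (pose proof (Rmin_r 1 (g^2/16)); lra).
 assert (q*q < g*g/4) by nra.
 assert (q < g/2) by nra.
 destruct (Rle_lt_dec g 4); nra.
Qed.

Lemma hd_add x y C : 1 <= x -> 1 <= y -> 1 <= C -> hdc x + hdc y = hdc C ->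
  C = x*y + sqrt (x*x-1) * sqrt (y*y-1).
Proof. intros. assert (exp (hdc x + hdc y) = exp (hdc C)) by (rewrite H2; auto).
 rewrite exp_plus, !hd_exp in H3; auto.
 assert (Hx: sqrt (x*x-1) * sqrt (x*x-1) = x*x-1) by (apply sqrt_sqrt; nra).
 assert (Hy: sqrt (y*y-1) * sqrt (y*y-1) = y*y-1) by (apply sqrt_sqrt; nra).
 assert (HC: sqrt (C*C-1) * sqrt (C*C-1) = C*C-1) by (apply sqrt_sqrt; nra).
 pose proof (sqrt_pos (x*x-1)). pose proof (sqrt_pos (y*y-1)). pose proof (sqrt_pos (C*C-1)).
 set (sx := sqrt (x*x-1)) in *. set (sy := sqrt (y*y-1)) in *. set (sC := sqrt (C*C-1)) in *.
 assert (E1: (x+sx)*(x-sx) = 1) by nra. assert (E2: (y+sy)*(y-sy)=1) by nra. assert (E3: (C+sC)*(C-sC)=1) by nra.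
 assert ((x-sx)*(y-sy) = C - sC).
 { assert (0 < C + sC) by nra.
   apply (Rmult_eq_reg_l (C+sC)); [| lra]. rewrite E3. rewrite <- H3.
   transitivity (((x+sx)*(x-sx))*((y+sy)*(y-sy))); [ring|]. rewrite E1, E2; ring. }
 nra.
Qed.


Definition Cf (p q : pt) : R := 1 + ((fst p - fst q)^2 + (snd p - snd q)^2) / (2 * snd p * snd q).
Definition L0 (s z : pt) := Cf z s.
Definition L1 (s z : pt) := (fst z - fst s)/snd z.
Definition L2 (s z : pt) := ((fst z - fst s)^2 + snd z^2 - snd s^2)/(2*snd s*snd z).

Lemma Cf_mink s z w : inH s -> inH z -> inH w ->
  Cf z w = L0 s z * L0 s w - L1 s z * L1 s w - L2 s z * L2 s w.
Proof. unfold inH. destruct s as [a b], z as [x y], w as [u v]; simpl; intros.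
unfold L0,L1,L2,Cf; simpl. field. lra. Qed.

Lemma Cf_sym p q : Cf p q = Cf q p.
Proof. unfold Cf, Rdiv. f_equal. f_equal; [ring| f_equal; ring]. Qed.

Lemma Cf_ge1 p q : inH p -> inH q -> 1 <= Cf p q.
Proof. unfold inH, Cf; intros. assert (0 <= ((fst p - fst q)^2 + (snd p - snd q)^2) / (2 * snd p * snd q)).
 apply Rmult_le_pos. apply Rplus_le_le_0_compat; apply pow2_ge_0. left; apply Rinv_0_lt_compat; nra. lra. Qed.

Lemma Cf_gt1 p q : inH p -> inH q -> p <> q -> 1 < Cf p q.
Proof. unfold inH, Cf; intros. destruct p as [x y], q as [u v]; simpl in *.
 assert (0 < (x - u)^2 + (y - v)^2).
 { destruct (Req_dec x u); destruct (Req_dec y v); subst; try (exfalso; auto; fail); nra. }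
 assert (0 < ((x - u)^2 + (y - v)^2) / (2 * y * v)).
 apply Rmult_lt_0_compat; auto. apply Rinv_0_lt_compat; nra. lra. Qed.

Lemma Cf_refl p : inH p -> Cf p p = 1.
Proof. unfold inH, Cf; intros. unfold Rdiv. replace ((fst p - fst p)^2 + (snd p - snd p)^2) with 0 by ring. ring. Qed.

Lemma H_norm s z : inH s -> inH z -> L0 s z * L0 s z - L1 s z * L1 s z - L2 s z * L2 s z = 1.
Proof. intros. rewrite <- (Cf_mink s z z); auto. apply Cf_refl; auto. Qed.

Lemma H0_ge1 s z : inH s -> inH z -> 1 <= L0 s z.
Proof. intros; unfold L0; apply Cf_ge1; auto. Qed.

Lemma H_self s : inH s -> L0 s s = 1 /\ L1 s s = 0 /\ L2 s s = 0.
Proof. unfold inH; intros. unfold L0, L1, L2. rewrite Cf_refl; auto. split; auto. split; field; lra. Qed.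

Lemma H_inj s z w : inH s -> inH z -> inH w -> L0 s z = L0 s w -> L1 s z = L1 s w -> L2 s z = L2 s w -> z = w.
Proof. unfold inH, L0, L1, L2, Cf. destruct s as [a b], z as [x y], w as [u v]; cbn [fst snd]; intros Hb Hy Hv E0 E1 E2.
 assert (b / y = b / v).
 { replace (b/y) with (1 + ((x - a) ^ 2 + (y - b) ^ 2) / (2 * y * b) - ((x - a) ^ 2 + y ^ 2 - b ^ 2) / (2 * b * y)) by (field; lra).
   rewrite E0, E2. field; lra. }
 assert (y = v). { apply (Rmult_eq_reg_l (b / (y*v))). replace (b/(y*v)*y) with (b/v) by (field; lra). replace (b/(y*v)*v) with (b/y) by (field;lra). auto.
   apply Rgt_not_eq. apply Rdiv_lt_0_compat; nra. }
 subst v. assert (x = u). { apply (Rmult_eq_reg_r (/y)). replace (x * /y) with ((x-a)/y + a/y) by (field; lra). rewrite E1. field; lra. apply Rgt_not_eq, Rinv_0_lt_compat; lra. }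
 subst; auto. Qed.

Definition lam (k1 k2 : R) := sqrt (1 - k1*k1 - k2*k2).
Definition P (s : pt) (k1 k2 : R) : pt :=
  (fst s + snd s * k1 / (1 - k2), snd s * lam k1 k2 / (1 - k2)).

Lemma lam_pos k1 k2 : k1*k1 + k2*k2 < 1 -> 0 < lam k1 k2.
Proof. intros; unfold lam; apply sqrt_lt_R0; lra. Qed.
Lemma lam_sq k1 k2 : k1*k1 + k2*k2 < 1 -> lam k1 k2 * lam k1 k2 = 1 - k1*k1 - k2*k2.
Proof. intros; unfold lam; apply sqrt_sqrt; lra. Qed.

Lemma P_inH s k1 k2 : inH s -> k1*k1 + k2*k2 < 1 -> inH (P s k1 k2).
Proof. unfold inH, P; simpl; intros. pose proof (lam_pos k1 k2 H0).
 assert (k2 < 1) by nra. apply Rdiv_lt_0_compat; nra. Qed.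

Lemma H_P s k1 k2 : inH s -> k1*k1 + k2*k2 < 1 ->
  L0 s (P s k1 k2) = / lam k1 k2 /\ L1 s (P s k1 k2) = k1 / lam k1 k2 /\ L2 s (P s k1 k2) = k2 / lam k1 k2.
Proof. intros Hs Hk. pose proof (lam_pos k1 k2 Hk) as Hl. pose proof (lam_sq k1 k2 Hk) as Hl2.
 assert (k2 < 1) by nra. unfold inH in Hs.
 assert (e1: L1 s (P s k1 k2) = k1 / lam k1 k2).
 { unfold L1, P; cbn [fst snd]. field. split; nra. }
 assert (e2: L2 s (P s k1 k2) = k2 / lam k1 k2).
 { unfold L2, P; cbn [fst snd]. destruct s as [a b]; cbn [fst snd] in *. set (l := lam k1 k2) in *.
   replace ((a + b*k1/(1-k2) - a)^2 + (b*l/(1-k2))^2 - b^2) with (b^2 * (k1*k1 + l*l - (1-k2)^2)/(1-k2)^2) by (field; lra).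
   rewrite Hl2. field. split; lra. }
 split; [| split; auto].
 pose proof (H_norm s (P s k1 k2) Hs (P_inH s k1 k2 Hs Hk)) as N. rewrite e1, e2 in N.
 pose proof (H0_ge1 s (P s k1 k2) Hs (P_inH s k1 k2 Hs Hk)) as G.
 set (l := lam k1 k2) in *. set (h := L0 s (P s k1 k2)) in *.
 assert (h * h * (l*l) = 1).
 { assert (h*h = 1 + (k1/l)*(k1/l) + (k2/l)*(k2/l)) by lra. rewrite H0. apply (Rmult_eq_reg_r (/(l*l))). 2:{ apply Rgt_not_eq, Rinv_0_lt_compat; nra. }
   replace ((1 + k1 / l * (k1 / l) + k2 / l * (k2 / l)) * (l * l) * / (l * l)) with ((l*l + k1*k1 + k2*k2)/(l*l)) by (field; lra).
   rewrite Hl2. field. lra. }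
 assert ((h*l) * (h*l) = 1) by nra. assert (0 < h*l) by nra.
 assert (h * l = 1) by nra. apply (Rmult_eq_reg_r l); [| lra]. rewrite Rinv_l; lra.
Qed.


Lemma null_orth v0 v1 v2 a0 a1 a2 : 0 < a0 -> a0*a0 - a1*a1 - a2*a2 = 1 ->
  v0*v0 - v1*v1 - v2*v2 = 0 -> v0*a0 - v1*a1 - v2*a2 = 0 -> v0 = 0 /\ v1 = 0 /\ v2 = 0.
Proof. intros.
 assert ((v1*a1+v2*a2)*(v1*a1+v2*a2) + (v1*a2 - v2*a1)*(v1*a2-v2*a1) = (v1*v1+v2*v2)*(a1*a1+a2*a2)) by ring.
 assert (v0*a0 = v1*a1+v2*a2) by lra.
 assert (v0*v0*(a0*a0) = (v1*a1+v2*a2)*(v1*a1+v2*a2)) by (rewrite <- H4; ring).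
 assert (v1*v1+v2*v2 = v0*v0) by lra. assert (a1*a1+a2*a2 = a0*a0-1) by lra.
 pose proof (Rle_0_sqr (v1*a2 - v2*a1)). unfold Rsqr in H8.
 assert ((v1*v1+v2*v2)*(a1*a1+a2*a2) = v0*v0*(a0*a0-1)) by (rewrite H6, H7; ring).
 assert (v0*v0*(a0*a0-1) = v0*v0*(a0*a0) - v0*v0) by ring.
 assert (v0 * v0 <= 0) by lra. assert (v0 = 0) by nra. subst. nra. Qed.

Lemma seg_alg a0 a1 a2 b0 b1 b2 z0 z1 z2 :
  0 < a0 -> a0*a0 - a1*a1 - a2*a2 = 1 -> b0*b0 - b1*b1 - b2*b2 = 1 -> z0*z0 - z1*z1 - z2*z2 = 1 ->
  let x := a0*z0 - a1*z1 - a2*z2 in let y := z0*b0 - z1*b1 - z2*b2 in let C := a0*b0 - a1*b1 - a2*b2 in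
  1 <= x -> 1 <= y -> 1 < C -> C = x*y + sqrt (x*x-1) * sqrt (y*y-1) ->
  exists al be, 0 <= al /\ 0 <= be /\ z0 = al*a0 + be*b0 /\ z1 = al*a1 + be*b1 /\ z2 = al*a2 + be*b2.
Proof. intros Ha0 NA NB NZ x y C Hx Hy HC E.
 pose proof (sqrt_pos (x*x-1)). pose proof (sqrt_pos (y*y-1)).
 assert (Sx: sqrt (x*x-1) * sqrt (x*x-1) = x*x-1) by (apply sqrt_sqrt; nra).
 assert (Sy: sqrt (y*y-1) * sqrt (y*y-1) = y*y-1) by (apply sqrt_sqrt; nra).
 set (sx := sqrt (x*x-1)) in *. set (sy := sqrt (y*y-1)) in *.
 assert (D: 0 < C*C - 1) by nra.
 set (al := (C*y - x)/(C*C-1)). set (be := (C*x - y)/(C*C-1)).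
 assert (Hal: 0 <= al). { unfold al. apply Rle_mult_inv_pos; [|lra]. rewrite E. nra. }
 assert (Hbe: 0 <= be). { unfold be. apply Rle_mult_inv_pos; [|lra]. rewrite E. nra. }
 assert (K: (C - x*y)*(C-x*y) = (x*x-1)*(y*y-1)) by (rewrite E; nra).
 set (v0 := z0 - al*a0 - be*b0). set (v1 := z1 - al*a1 - be*b1). set (v2 := z2 - al*a2 - be*b2).
 assert (O1: v0*a0 - v1*a1 - v2*a2 = 0).
 { unfold v0, v1, v2. transitivity (x - al - be*C). unfold x, C; nra.
   unfold al, be. field; lra. }
 assert (O2: v0*b0 - v1*b1 - v2*b2 = 0).
 { unfold v0, v1, v2. transitivity (y - al*C - be). unfold y, C; nra.
   unfold al, be. field; lra. }
 assert (O3: v0*v0 - v1*v1 - v2*v2 = 0).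
 { transitivity (v0*z0 - v1*z1 - v2*z2 - al*(v0*a0 - v1*a1 - v2*a2) - be*(v0*b0 - v1*b1 - v2*b2)).
   unfold v0, v1, v2; ring. rewrite O1, O2.
   transitivity (1 - al*x - be*y). unfold v0,v1,v2,x,y; nra.
   assert (al*x + be*y = (2*C*x*y - x*x - y*y)/(C*C-1)) by (unfold al,be; field; lra).
   replace (1 - al*x - be*y) with (1 - (al*x + be*y)) by ring. rewrite H1. replace (2*C*x*y - x*x - y*y) with (C*C-1) by nra. field; lra. }
 destruct (null_orth v0 v1 v2 a0 a1 a2 Ha0 NA O3 O1) as [? [? ?]].
 exists al, be. unfold v0, v1, v2 in *. repeat split; auto; lra.
Qed.


Lemma hdist_hd p q : hdist p q = hdc (Cf p q).
Proof. reflexivity. Qed.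

Definition G (s t z : pt) := (L0 s t - 1) * L0 s z - L1 s t * L1 s z - L2 s t * L2 s z.
Definition mk (s t z : pt) := L0 s t * L0 s z - L1 s t * L1 s z - L2 s t * L2 s z.

Lemma Cf_mk s t z : inH s -> inH t -> inH z -> Cf z t = mk s t z.
Proof. intros. rewrite (Cf_mink s z t); auto. unfold mk; ring. Qed.

Lemma cell_s_iff s t y : inH s -> inH t -> inH y -> (hdist y s < hdist y t <-> 0 < G s t y).
Proof. intros. rewrite !hdist_hd. rewrite hd_lt_iff by (apply Cf_ge1; auto).
 rewrite (Cf_mk s t y); auto. unfold G, mk. change (Cf y s) with (L0 s y). split; intros; lra. Qed.

Lemma cell_t_iff s t t' y : inH s -> inH t -> inH t' -> inH y -> (hdist y t < hdist y t' <-> mk s t y < mk s t' y).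
Proof. intros. rewrite !hdist_hd. rewrite hd_lt_iff by (apply Cf_ge1; auto).
 rewrite (Cf_mk s t y), (Cf_mk s t' y); auto. tauto. Qed.

Lemma dl_pos eps : 0 < eps -> 0 < dl eps.
Proof. intros. unfold dl. assert (1 < exp eps). { pose proof (exp_increasing 0 eps). rewrite exp_0 in H0. apply H0; lra. }
 apply Rmin_pos; [lra|]. apply Rmult_lt_0_compat; [| lra]. apply pow_lt; lra. Qed.

Lemma fin_delta (A : Type) (l : list A) (Q : A -> R -> Prop) :
  (forall a, In a l -> exists e, 0 < e /\ forall h, 0 < h < e -> Q a h) ->
  exists e, 0 < e /\ forall a, In a l -> forall h, 0 < h < e -> Q a h.
Proof. induction l; intros.
 exists 1; split; [lra|]; intros a H0; destruct H0.
 destruct IHl as [e1 [He1 H1]]. intros; apply H; simpl; auto.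
 destruct (H a (or_introl eq_refl)) as [e2 [He2 H2]].
 exists (Rmin e1 e2); split. apply Rmin_pos; auto.
 intros b [<-|Hb] h Hh. apply H2; pose proof (Rmin_r e1 e2); lra.
 apply H1; auto; pose proof (Rmin_l e1 e2); lra. Qed.

(* Klein approximation along the ray through z *)
Lemma approx s z d : inH s -> inH z -> 0 < d ->
  exists eta, 0 < eta /\ forall la, 0 <= la -> 1 - eta < la < 1 + eta ->
   let k1 := L1 s z / L0 s z in let k2 := L2 s z / L0 s z in
   (la*k1)*(la*k1) + (la*k2)*(la*k2) < 1 /\ Cf z (P s (la*k1) (la*k2)) < 1 + d.
Proof. intros Hs Hz Hd.
 pose proof (H_norm s z Hs Hz) as N. pose proof (H0_ge1 s z Hs Hz) as Z0g.
 set (Z0 := L0 s z) in *. set (Z1 := L1 s z) in *. set (Z2 := L2 s z) in *.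
 set (m := Rmin 1 d). assert (0 < m) by (apply Rmin_pos; lra).
 assert (m <= 1) by apply Rmin_l. assert (m <= d) by apply Rmin_r.
 exists (m / (6 * (Z0*Z0))). split. apply Rdiv_lt_0_compat; nra.
 intros la Hla0 Hla k1 k2.
 set (rho := k1*k1 + k2*k2).
 assert (Hr0: rho = (Z1*Z1+Z2*Z2)/(Z0*Z0)) by (unfold rho,k1,k2; field; lra).
 assert (Hrho: rho * (Z0*Z0) = Z0*Z0 - 1) by (rewrite Hr0; field_simplify; lra).
 assert (rho0: 0 <= rho) by (unfold rho; nra).
 set (eta := m / (6 * (Z0*Z0))) in *.
 assert (Heta: eta * (6*(Z0*Z0)) = m) by (unfold eta; field; lra).
 assert (eta <= 1/6) by nra.
 assert (eta > 0) by (unfold eta; apply Rdiv_lt_0_compat; nra).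
 assert (la*la <= (1+eta)*(1+eta)) by nra.
 assert (la*la <= 1 + 3*eta) by nra.
 assert (Hq: la*la*rho <= rho + 3*eta*rho) by nra.
 assert (Hq2: 3*eta*(2*(Z0*Z0)) <= 1) by nra.
 assert (Hq3: (la*la*rho)*(2*(Z0*Z0)) <= rho*(2*(Z0*Z0)) + 1) by nra.
 assert (HQ: la*la*rho*(2*(Z0*Z0)) <= 2*(Z0*Z0) - 1) by nra.
 assert (Hk: (la*k1)*(la*k1) + (la*k2)*(la*k2) = la*la*rho) by (unfold rho; ring).
 assert (Hlt: (la*k1)*(la*k1) + (la*k2)*(la*k2) < 1) by nra.
 split; auto.
 pose proof (H_P s (la*k1) (la*k2) Hs Hlt) as [P0 [P1 P2]].
 pose proof (P_inH s (la*k1) (la*k2) Hs Hlt) as Py.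
 pose proof (lam_pos _ _ Hlt) as lp. pose proof (lam_sq _ _ Hlt) as ls.
 set (y := P s (la*k1) (la*k2)) in *. set (ly := lam (la*k1) (la*k2)) in *.
 pose proof (Cf_ge1 z y Hz Py) as Cg.
 rewrite (Cf_mink s z y Hs Hz Py). fold Z0 Z1 Z2 in Cg |- *. rewrite P0, P1, P2.
 assert (Hx: Z1*k1 + Z2*k2 = Z0*rho) by (rewrite Hr0; unfold k1, k2; field; lra).
 set (C := Z0 * / ly - Z1 * (la * k1 / ly) - Z2 * (la * k2 / ly)).
 assert (HC: C * ly = Z0*(1 - la*rho)) by (unfold C; transitivity (Z0 - la*(Z1*k1+Z2*k2)); [field; lra| rewrite Hx; ring]).
 assert (Cg' : 1 <= C). { unfold C. rewrite (Cf_mink s z y Hs Hz Py) in Cg. fold Z0 Z1 Z2 in Cg. rewrite P0,P1,P2 in Cg. exact Cg. }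
 assert (E1: (C*C - 1)*(ly*ly) = Z0*Z0*rho*((1-la)*(1-la))).
 { replace ((C*C-1)*(ly*ly)) with ((C*ly)*(C*ly) - ly*ly) by ring. rewrite HC, ls.
   replace (1 - la * k1 * (la * k1) - la * k2 * (la * k2)) with (1 - la*la*rho) by (rewrite <- Hk; ring).
   assert (Z0*Z0 = 1 + rho*(Z0*Z0)) by lra.
   assert (W: Z0*Z0 - rho*(Z0*Z0) = 1) by lra.
   transitivity (Z0*Z0*(1-la*rho)*(1-la*rho) - (1 - la*la*rho)*(Z0*Z0 - rho*(Z0*Z0))). rewrite W; ring. ring. }
 assert (rho <= 1) by (assert (0 < Z0*Z0) by nra; nra).
 assert (0 < (eta - (1-la))*(eta + (1-la))) by (apply Rmult_lt_0_compat; lra).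
 assert (E2: (1-la)*(1-la) <= eta*eta) by lra.
 assert (E2': rho*((1-la)*(1-la)) <= eta*eta).
 { apply Rle_trans with ((1-la)*(1-la)); auto. rewrite <- (Rmult_1_l ((1-la)*(1-la))) at 2. apply Rmult_le_compat_r; auto. apply Rle_0_sqr. }
 assert (E3: Z0*Z0*rho*((1-la)*(1-la)) <= Z0*Z0*(eta*eta)).
 { rewrite Rmult_assoc. apply Rmult_le_compat_l; auto. apply Rle_0_sqr. }
 assert (Lq: ly*ly = 1 - la*la*rho) by (rewrite ls, <- Hk; ring).
 assert (E4: 1 <= (ly*ly)*(2*(Z0*Z0))).
 { rewrite Lq. replace ((1 - la*la*rho)*(2*(Z0*Z0))) with (2*(Z0*Z0) - la*la*rho*(2*(Z0*Z0))) by ring. lra. }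
 assert (Cp: 0 <= C*C - 1) by (assert (1 <= C*C) by (apply Rle_trans with (1*C); [lra| apply Rmult_le_compat_r; lra]); lra).
 assert (E5: C*C - 1 <= (C*C-1)*((ly*ly)*(2*(Z0*Z0)))).
 { assert (0 <= (C*C-1)*((ly*ly)*(2*(Z0*Z0)) - 1)) by (apply Rmult_le_pos; lra).
   replace ((C*C-1)*((ly*ly)*(2*(Z0*Z0)) - 1)) with ((C*C-1)*((ly*ly)*(2*(Z0*Z0))) - (C*C-1)) in H5 by ring. lra. }
 assert (E6: (C*C-1) <= 2*(Z0*Z0)*(Z0*Z0)*(eta*eta)).
 { replace ((C*C-1)*((ly*ly)*(2*(Z0*Z0)))) with (((C*C-1)*(ly*ly))*(2*(Z0*Z0))) in E5 by ring.
   rewrite E1 in E5. apply Rle_trans with (1 := E5).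
   replace (2*(Z0*Z0)*(Z0*Z0)*(eta*eta)) with ((Z0*Z0*(eta*eta))*(2*(Z0*Z0))) by ring.
   apply Rmult_le_compat_r; [nra| exact E3]. }
 assert (E7: 2*(Z0*Z0)*(Z0*Z0)*(eta*eta) = m*m/18). { rewrite <- Heta. field. }
 assert (m*m <= m*1) by (apply Rmult_le_compat_l; lra).
 assert (C - 1 <= C*C - 1) by (assert (C <= C*C) by (rewrite <- (Rmult_1_l C) at 1; apply Rmult_le_compat_r; lra); lra).
 lra.
Qed.


Lemma pt_eq_dec (p q : pt) : {p = q} + {p <> q}.
Proof. destruct p as [a b], q as [c d]. destruct (Req_EM_T a c); destruct (Req_EM_T b d); subst; auto; right; intros H; inversion H; auto. Qed.

Lemma G_P s t k1 k2 : inH s -> k1*k1 + k2*k2 < 1 ->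
  G s t (P s k1 k2) = ((L0 s t - 1) - (L1 s t * k1 + L2 s t * k2)) / lam k1 k2.
Proof. intros. destruct (H_P s k1 k2 H H0) as [e0 [e1 e2]]. pose proof (lam_pos _ _ H0).
 unfold G. rewrite e0, e1, e2. field. lra. Qed.

Lemma mk_P s t k1 k2 : inH s -> k1*k1 + k2*k2 < 1 ->
  mk s t (P s k1 k2) = (L0 s t - (L1 s t * k1 + L2 s t * k2)) / lam k1 k2.
Proof. intros. destruct (H_P s k1 k2 H H0) as [e0 [e1 e2]]. pose proof (lam_pos _ _ H0).
 unfold mk. rewrite e0, e1, e2. field. lra. Qed.

Lemma G_z s t z : inH s -> inH z ->
  G s t z = L0 s z * ((L0 s t - 1) - (L1 s t * (L1 s z / L0 s z) + L2 s t * (L2 s z / L0 s z))).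
Proof. intros. pose proof (H0_ge1 s z H H0). unfold G. field. lra. Qed.

Lemma T0_gt1 s t : inH s -> inH t -> t <> s -> 1 < L0 s t.
Proof. intros. unfold L0. apply Cf_gt1; auto. Qed.

Lemma clos_s S s z : inH s -> (forall t, In t S -> inH t) -> inH z ->
  (forall t, In t S -> t <> s -> 0 <= G s t z) -> hclosure (voronoi S s) z.
Proof. intros Hs HS Hz HG. split; auto. intros eps He.
 destruct (approx s z (dl eps) Hs Hz (dl_pos eps He)) as [eta [Heta Ha]].
 set (la := 1 - Rmin eta 1 / 2).
 assert (0 < Rmin eta 1) by (apply Rmin_pos; lra). pose proof (Rmin_l eta 1). pose proof (Rmin_r eta 1).
 destruct (Ha la) as [Hk Hc]. unfold la; lra. unfold la; lra.
 set (k1 := L1 s z / L0 s z) in *. set (k2 := L2 s z / L0 s z) in *.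
 exists (P s (la*k1) (la*k2)). split.
 - split. apply P_inH; auto. intros t Ht Hts. apply cell_s_iff; auto. apply P_inH; auto.
   rewrite G_P; auto. pose proof (lam_pos _ _ Hk). apply Rdiv_lt_0_compat; auto.
   pose proof (T0_gt1 s t Hs (HS t Ht) Hts). pose proof (HG t Ht Hts). rewrite G_z in H4; auto.
   pose proof (H0_ge1 s z Hs Hz).
   assert (L1 s t * k1 + L2 s t * k2 <= L0 s t - 1).
   { unfold k1, k2. destruct (Rle_lt_dec (L1 s t * (L1 s z / L0 s z) + L2 s t * (L2 s z / L0 s z)) (L0 s t - 1)); auto. nra. }
   assert (la < 1) by (unfold la; lra). assert (0 < la) by (unfold la; lra).
   replace (L1 s t * (la * k1) + L2 s t * (la * k2)) with (la * (L1 s t * k1 + L2 s t * k2)) by ring.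
   destruct (Rle_lt_dec 0 (L1 s t * k1 + L2 s t * k2)); nra.
 - rewrite hdist_hd. apply hd_small; auto. apply Cf_ge1; auto. apply P_inH; auto.
Qed.

Lemma clos_t S s ts z : inH s -> (forall t, In t S -> inH t) -> In ts S -> ts <> s -> inH z ->
  G s ts z = 0 -> (forall t, In t S -> t <> s -> t <> ts -> 0 < G s t z) -> hclosure (voronoi S ts) z.
Proof. intros Hs HS Hts Htss Hz HG0 HG. split; auto. intros eps He.
 pose proof (H0_ge1 s z Hs Hz) as Z0g.
 set (k1 := L1 s z / L0 s z). set (k2 := L2 s z / L0 s z).
 assert (Xs : L1 s ts * k1 + L2 s ts * k2 = L0 s ts - 1).
 { rewrite G_z in HG0; auto. fold k1 k2 in HG0. assert (L0 s z <> 0) by lra.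
   apply Rmult_integral in HG0. destruct HG0; [lra|]. lra. }
 destruct (fin_delta pt S (fun t h => t <> s -> t <> ts ->
     0 < (L0 s t - L0 s ts) - (1+h)*((L1 s t * k1 + L2 s t * k2) - (L1 s ts * k1 + L2 s ts * k2)))) as [e' [He' Q]].
 { intros t Ht. destruct (pt_eq_dec t s) as [->|n1]. exists 1; split; [lra|]; intros; congruence.
   destruct (pt_eq_dec t ts) as [->|n2]. exists 1; split; [lra|]; intros; congruence.
   pose proof (HG t Ht n1 n2). rewrite G_z in H; auto. fold k1 k2 in H.
   set (X := L1 s t * k1 + L2 s t * k2) in *.
   assert (a: 0 < L0 s t - 1 - X). { destruct (Rle_lt_dec (L0 s t - 1 - X) 0); auto. nra. }
   set (b := X - (L1 s ts * k1 + L2 s ts * k2)).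
   exists ((L0 s t - 1 - X)/(Rabs b + 1)). split. apply Rdiv_lt_0_compat; [lra| pose proof (Rabs_pos b); lra].
   intros h Hh _ _.
   assert (h * (Rabs b + 1) < L0 s t - 1 - X).
   { destruct Hh. apply (Rmult_lt_compat_r (Rabs b + 1)) in H1; [| pose proof (Rabs_pos b); lra].
     unfold Rdiv in H1. rewrite Rmult_assoc, Rinv_l in H1; [lra|]. pose proof (Rabs_pos b); lra. }
   pose proof (Rle_abs b) as ab1. pose proof (Rle_abs (-b)) as ab2. rewrite Rabs_Ropp in ab2.
   fold b. replace (L0 s t - L0 s ts - (1 + h) * b) with ((L0 s t - 1 - X) - h*b) by (unfold b; rewrite Xs; ring).
   destruct Hh. nra. }
 destruct (approx s z (dl eps) Hs Hz (dl_pos eps He)) as [eta [Heta Ha]].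
 set (h := Rmin (Rmin eta e') 1 / 2). set (la := 1 + h).
 assert (0 < Rmin (Rmin eta e') 1) by (repeat apply Rmin_pos; lra).
 pose proof (Rmin_l (Rmin eta e') 1). pose proof (Rmin_r (Rmin eta e') 1).
 pose proof (Rmin_l eta e'). pose proof (Rmin_r eta e').
 destruct (Ha la) as [Hk Hc]. unfold la, h; lra. unfold la, h; lra.
 fold k1 k2 in Hk, Hc.
 exists (P s (la*k1) (la*k2)). split.
 - split. apply P_inH; auto. intros t Ht Htn.
   apply (proj2 (cell_t_iff s ts t _ Hs (HS ts Hts) (HS t Ht) (P_inH s _ _ Hs Hk))). rewrite !mk_P; auto.
   pose proof (lam_pos _ _ Hk). apply Rmult_lt_compat_r. apply Rinv_0_lt_compat; auto.
   replace (L1 s ts * (la * k1) + L2 s ts * (la * k2)) with (la * (L1 s ts * k1 + L2 s ts * k2)) by ring.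
   replace (L1 s t * (la * k1) + L2 s t * (la * k2)) with (la * (L1 s t * k1 + L2 s t * k2)) by ring.
   destruct (pt_eq_dec t s) as [->|n1].
   + destruct (H_self s Hs) as [a0 [a1 a2]]. rewrite a0, a1, a2, Xs.
     pose proof (T0_gt1 s ts Hs (HS ts Hts) Htss). unfold la, h. nra.
   + assert (0 < h < e') by (unfold h; lra).
     pose proof (Q t Ht h H5 n1 Htn). fold la in H6. lra.
 - rewrite hdist_hd. apply hd_small; auto. apply Cf_ge1; auto. apply P_inH; auto.
Qed.


Definition gk (s t : pt) (k1 k2 : R) := (L0 s t - 1) - (L1 s t * k1 + L2 s t * k2).

Lemma adj_chord S s ts k1 k2 m1 m2 : inH s -> (forall t, In t S -> inH t) -> In ts S -> ts <> s ->
  k1*k1 + k2*k2 < 1 -> m1*m1 + m2*m2 < 1 -> (k1 <> m1 \/ k2 <> m2) ->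
  gk s ts k1 k2 = 0 -> gk s ts m1 m2 = 0 ->
  (forall t, In t S -> t <> s -> t <> ts -> 0 < gk s t k1 k2 /\ 0 < gk s t m1 m2) ->
  delaunay_adj S s ts.
Proof. intros Hs HS Hts Htss Hk Hm Hne g1 g2 Hg.
 split. auto.
 pose proof (P_inH s k1 k2 Hs Hk) as Ha. pose proof (P_inH s m1 m2 Hs Hm) as Hb.
 destruct (H_P s k1 k2 Hs Hk) as [a0 [a1 a2]]. destruct (H_P s m1 m2 Hs Hm) as [b0 [b1 b2]].
 pose proof (lam_pos _ _ Hk) as lk. pose proof (lam_pos _ _ Hm) as lm.
 set (a := P s k1 k2) in *. set (b := P s m1 m2) in *.
 assert (Hab: a <> b).
 { intros E. assert (L0 s a = L0 s b) by (rewrite E; auto). assert (L1 s a = L1 s b) by (rewrite E; auto).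
   assert (L2 s a = L2 s b) by (rewrite E; auto).
   rewrite a0, b0 in H. rewrite a1, b1 in H0. rewrite a2, b2 in H1.
   assert (lam k1 k2 = lam m1 m2). { rewrite <- (Rinv_inv (lam k1 k2)), <- (Rinv_inv (lam m1 m2)). rewrite H. auto. }
   rewrite H2 in H0, H1. unfold Rdiv in H0, H1.
   apply Rmult_eq_reg_r in H0; [| apply Rinv_neq_0_compat; lra].
   apply Rmult_eq_reg_r in H1; [| apply Rinv_neq_0_compat; lra]. tauto. }
 exists a, b. split; auto. split; auto. split; auto.
 intros z [Hz Heq].
 rewrite !hdist_hd in Heq.
 pose proof (Cf_ge1 a z Ha Hz). pose proof (Cf_ge1 z b Hz Hb). pose proof (Cf_gt1 a b Ha Hb Hab).
 pose proof (hd_add _ _ _ H H0 (Rlt_le _ _ H1) Heq) as E.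
 rewrite (Cf_mink s a z), (Cf_mink s z b), (Cf_mink s a b) in *; auto.
 destruct (seg_alg (L0 s a) (L1 s a) (L2 s a) (L0 s b) (L1 s b) (L2 s b) (L0 s z) (L1 s z) (L2 s z))
   as [al [be [Hal [Hbe [Z0 [Z1 Z2]]]]]]; auto.
 pose proof (H0_ge1 s a Hs Ha); lra.
 apply H_norm; auto. apply H_norm; auto. apply H_norm; auto.
 assert (Glin: forall t, G s t z = al * G s t a + be * G s t b).
 { intros t. unfold G. rewrite Z0, Z1, Z2. ring. }
 assert (Ga: forall t, G s t a = gk s t k1 k2 / lam k1 k2). { intros; unfold a; rewrite G_P; auto. }
 assert (Gb: forall t, G s t b = gk s t m1 m2 / lam m1 m2). { intros; unfold b; rewrite G_P; auto. }
 assert (ab: 0 < al + be).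
 { pose proof (H0_ge1 s z Hs Hz). pose proof (H0_ge1 s a Hs Ha). pose proof (H0_ge1 s b Hs Hb).
   destruct (Rle_lt_dec (al+be) 0); auto. assert (al = 0) by lra. assert (be = 0) by lra. subst. lra. }
 split.
 - apply (clos_s S s z); auto. intros t Ht Hts'.
   destruct (pt_eq_dec t ts) as [->|n].
   + rewrite Glin, Ga, Gb, g1, g2. unfold Rdiv. lra.
   + destruct (Hg t Ht Hts' n). rewrite Glin, Ga, Gb.
     assert (0 < gk s t k1 k2 / lam k1 k2) by (apply Rdiv_lt_0_compat; auto).
     assert (0 < gk s t m1 m2 / lam m1 m2) by (apply Rdiv_lt_0_compat; auto). nra.
 - apply (clos_t S s ts z); auto.
   + rewrite Glin, Ga, Gb, g1, g2. unfold Rdiv. lra.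
   + intros t Ht Hts' n. destruct (Hg t Ht Hts' n). rewrite Glin, Ga, Gb.
     assert (0 < gk s t k1 k2 / lam k1 k2) by (apply Rdiv_lt_0_compat; auto).
     assert (0 < gk s t m1 m2 / lam m1 m2) by (apply Rdiv_lt_0_compat; auto).
     destruct (Rle_lt_dec al 0). assert (al = 0) by lra. subst. nra. nra.
Qed.


Lemma bounded_dir S s c0 s0 : inH s -> (forall t, In t S -> inH t) -> bounded_cell S s ->
  c0*c0 + s0*s0 = 1 ->
  exists t, In t S /\ t <> s /\ L0 s t - 1 < L1 s t * c0 + L2 s t * s0.
Proof. intros Hs HS [M HM] Hc.
 apply NNPP. intros Hn.
 assert (A: forall t, In t S -> t <> s -> L1 s t * c0 + L2 s t * s0 <= L0 s t - 1).
 { intros t Ht Hts. apply Rnot_lt_le. intros Hl. apply Hn. exists t; auto. }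
 set (E := exp M + 1). assert (0 < exp M) by apply exp_pos. assert (1 < E) by (unfold E; lra).
 set (la := 1 - / (4*(E*E))).
 assert (0 < / (4*(E*E))) by (apply Rinv_0_lt_compat; nra).
 assert (/ (4*(E*E)) * (4*(E*E)) = 1) by (field; lra).
 assert (/ (4*(E*E)) < 1/4) by nra.
 assert (0 < la < 1) by (unfold la; lra).
 assert (Hk: (la*c0)*(la*c0) + (la*s0)*(la*s0) < 1) by nra.
 set (y := P s (la*c0) (la*s0)).
 assert (Hy: inH y) by (apply P_inH; auto).
 assert (V: voronoi S s y).
 { split; auto. intros t Ht Hts. apply (proj2 (cell_s_iff s t y Hs (HS t Ht) Hy)).
   unfold y. rewrite G_P; auto. apply Rdiv_lt_0_compat; [| apply lam_pos; auto].
   pose proof (A t Ht Hts). pose proof (T0_gt1 s t Hs (HS t Ht) Hts).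
   replace (L1 s t * (la * c0) + L2 s t * (la * s0)) with (la * (L1 s t * c0 + L2 s t * s0)) by ring.
   destruct (Rle_lt_dec 0 (L1 s t * c0 + L2 s t * s0)); nra. }
 pose proof (HM y V) as HB. rewrite hdist_hd, Cf_sym in HB.
 apply hd_le_M in HB; [| apply Cf_ge1; auto].
 change (Cf y s) with (L0 s y) in HB. unfold y in HB. destruct (H_P s _ _ Hs Hk) as [e0 _]. rewrite e0 in HB.
 pose proof (lam_pos _ _ Hk) as lp. pose proof (lam_sq _ _ Hk) as ls.
 set (l := lam (la*c0) (la*s0)) in *.
 assert (LL: l*l = 1 - la*la) by (rewrite ls; nra).
 assert (1 - la*la <= 2*(1-la)) by nra.
 assert (2*(1-la) * (E*E) = 1/2) by (unfold la; field; lra).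
 assert (l*l*(E*E) <= 1/2).
 { rewrite LL. apply Rle_trans with (2*(1-la)*(E*E)); [apply Rmult_le_compat_r; nra | lra]. }
 assert (/l <= E) by (unfold E; lra).
 assert (1 <= l * E). { apply (Rmult_le_reg_l (/l)). apply Rinv_0_lt_compat; auto. rewrite <- Rmult_assoc, Rinv_l; lra. }
 nra.
Qed.

Lemma lexmax (l : list pt) (s : pt) (e d : pt -> R) :
  (exists t, In t l /\ t <> s) ->
  exists ts, In ts l /\ ts <> s /\ forall t, In t l -> t <> s -> e t < e ts \/ (e t = e ts /\ d t <= d ts).
Proof. induction l as [|a l IH]; intros [t0 [H0 H1]]. destruct H0.
 destruct (classic (exists t, In t l /\ t <> s)) as [Ex|Nx].
 - destruct (IH Ex) as [ts [Hts [Hns Hmax]]].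
   destruct (pt_eq_dec a s) as [->|na].
   + exists ts; repeat split; simpl; auto. intros t [<-|Ht] Hn; [congruence| auto].
   + destruct (total_order_T (e a) (e ts)) as [[lt|eq]|gt].
     * exists ts; repeat split; simpl; auto. intros t [<-|Ht] Hn; auto.
     * destruct (Rle_lt_dec (d a) (d ts)).
       -- exists ts; repeat split; simpl; auto. intros t [<-|Ht] Hn; auto.
       -- exists a; repeat split; simpl; auto. intros t [<-|Ht] Hn. right; split; lra.
          destruct (Hmax t Ht Hn) as [h|[h1 h2]]. left; lra. right; split; lra.
     * exists a; repeat split; simpl; auto. intros t [<-|Ht] Hn. right; split; lra.
       destruct (Hmax t Ht Hn) as [h|[h1 h2]]; left; lra.
 - assert (a <> s). { destruct H0 as [<-|H0]; auto. exfalso; apply Nx; exists t0; auto. }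
   exists a; repeat split; simpl; auto. intros t [<-|Ht] Hn. right; split; lra.
   exfalso; apply Nx; exists t; auto.
Qed.

Definition ee (s t : pt) (c0 s0 : R) := (L1 s t * c0 + L2 s t * s0) / (L0 s t - 1).
Definition dd (s t : pt) (c0 s0 : R) := (- L1 s t * s0 + L2 s t * c0) / (L0 s t - 1).

Lemma ed_inj s t t' c0 s0 : inH s -> inH t -> inH t' -> t <> s -> t' <> s -> c0*c0 + s0*s0 = 1 ->
  ee s t c0 s0 = ee s t' c0 s0 -> dd s t c0 s0 = dd s t' c0 s0 -> t = t'.
Proof. intros Hs Ht Ht' n n' Hc E D.
 pose proof (T0_gt1 s t Hs Ht n). pose proof (T0_gt1 s t' Hs Ht' n').
 pose proof (H_norm s t Hs Ht). pose proof (H_norm s t' Hs Ht').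
 unfold ee, dd in *.
 set (T0 := L0 s t) in *. set (T1 := L1 s t) in *. set (T2 := L2 s t) in *.
 set (U0 := L0 s t') in *. set (U1 := L1 s t') in *. set (U2 := L2 s t') in *.
 assert (I1: forall A0 A1 A2, 1 < A0 -> A1/(A0-1) = (A1 * c0 + A2 * s0) / (A0 - 1) * c0 - (- A1 * s0 + A2 * c0) / (A0 - 1) * s0).
 { intros. replace ((A1 * c0 + A2 * s0) / (A0 - 1) * c0 - (- A1 * s0 + A2 * c0) / (A0 - 1) * s0) with (A1*(c0*c0+s0*s0)/(A0-1)) by (field; lra). rewrite Hc; field; lra. }
 assert (I2: forall A0 A1 A2, 1 < A0 -> A2/(A0-1) = (A1 * c0 + A2 * s0) / (A0 - 1) * s0 + (- A1 * s0 + A2 * c0) / (A0 - 1) * c0).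
 { intros. replace ((A1 * c0 + A2 * s0) / (A0 - 1) * s0 + (- A1 * s0 + A2 * c0) / (A0 - 1) * c0) with (A2*(c0*c0+s0*s0)/(A0-1)) by (field; lra). rewrite Hc; field; lra. }
 assert (u1: T1/(T0-1) = U1/(U0-1)) by (rewrite (I1 T0 T1 T2), (I1 U0 U1 U2), E, D; auto).
 assert (u2: T2/(T0-1) = U2/(U0-1)) by (rewrite (I2 T0 T1 T2), (I2 U0 U1 U2), E, D; auto).
 assert (N1: (T1/(T0-1))*(T1/(T0-1)) + (T2/(T0-1))*(T2/(T0-1)) = (T0+1)/(T0-1)).
 { replace (T1/(T0-1)*(T1/(T0-1)) + T2/(T0-1)*(T2/(T0-1))) with ((T1*T1+T2*T2)/((T0-1)*(T0-1))) by (field; lra).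
   replace (T1*T1+T2*T2) with ((T0-1)*(T0+1)) by lra. field; lra. }
 assert (N2: (U1/(U0-1))*(U1/(U0-1)) + (U2/(U0-1))*(U2/(U0-1)) = (U0+1)/(U0-1)).
 { replace (U1/(U0-1)*(U1/(U0-1)) + U2/(U0-1)*(U2/(U0-1))) with ((U1*U1+U2*U2)/((U0-1)*(U0-1))) by (field; lra).
   replace (U1*U1+U2*U2) with ((U0-1)*(U0+1)) by lra. field; lra. }
 rewrite u1, u2, N2 in N1.
 assert (T0 = U0).
 { assert ((U0+1)*(T0-1) = (T0+1)*(U0-1)).
   { apply (Rmult_eq_reg_r (/((T0-1)*(U0-1)))). 2: apply Rinv_neq_0_compat; nra.
     replace ((U0+1)*(T0-1)*/((T0-1)*(U0-1))) with ((U0+1)/(U0-1)) by (field; lra).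
     replace ((T0+1)*(U0-1)*/((T0-1)*(U0-1))) with ((T0+1)/(T0-1)) by (field; lra). auto. }
   lra. }
 rewrite <- H3 in u1, u2.
 assert (T1 = U1). { apply (Rmult_eq_reg_r (/(T0-1))); [| apply Rinv_neq_0_compat; lra]. exact u1. }
 assert (T2 = U2). { apply (Rmult_eq_reg_r (/(T0-1))); [| apply Rinv_neq_0_compat; lra]. exact u2. }
 apply (H_inj s t t'); auto.
Qed.

Lemma X_ee s t c0 s0 : inH s -> inH t -> t <> s ->
  L1 s t * c0 + L2 s t * s0 = (L0 s t - 1) * ee s t c0 s0 /\
  - L1 s t * s0 + L2 s t * c0 = (L0 s t - 1) * dd s t c0 s0.
Proof. intros. pose proof (T0_gt1 s t H H0 H1). unfold ee, dd. split; field; lra. Qed.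

Lemma gk_dir s t c0 s0 h mu : inH s -> inH t -> t <> s -> mu <> 0 ->
  gk s t ((c0 - h*s0)/mu) ((s0 + h*c0)/mu) = (L0 s t - 1) * (1 - (ee s t c0 s0 + h * dd s t c0 s0)/mu).
Proof. intros. destruct (X_ee s t c0 s0 H H0 H1) as [e1 e2]. unfold gk.
 replace (L1 s t * ((c0 - h * s0) / mu) + L2 s t * ((s0 + h * c0) / mu)) with
   ((L1 s t * c0 + L2 s t * s0 + h * (- L1 s t * s0 + L2 s t * c0))/mu) by (field; auto).
 rewrite e1, e2. field; auto. Qed.

Lemma le_div_mul a b c : 0 < c -> a <= b / c -> a * c <= b.
Proof. intros. apply (Rmult_le_compat_r c) in H0; [|lra]. unfold Rdiv in H0. replace (b * /c * c) with b in H0 by (field; lra). auto. Qed.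
Lemma lt_div_mul a b c : 0 < c -> a < b / c -> a * c < b.
Proof. intros. apply (Rmult_lt_compat_r c) in H0; [|lra]. unfold Rdiv in H0. replace (b * /c * c) with b in H0 by (field; lra). auto. Qed.

Lemma AB c0 s0 h mu : c0*c0+s0*s0 = 1 -> mu <> 0 ->
  c0*((c0-h*s0)/mu) + s0*((s0+h*c0)/mu) = 1/mu /\ - s0*((c0-h*s0)/mu) + c0*((s0+h*c0)/mu) = h/mu.
Proof. intros Hc Hm. split.
 transitivity ((c0*c0+s0*s0)/mu). field; auto. rewrite Hc; auto.
 transitivity (h*(c0*c0+s0*s0)/mu). field; auto. rewrite Hc; field; auto. Qed.

Lemma dir_cover S s c0 s0 : inH s -> (forall t, In t S -> inH t) -> bounded_cell S s ->
  c0*c0 + s0*s0 = 1 ->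
  exists t, In t S /\ delaunay_adj S s t /\ L0 s t - 1 <= L1 s t * c0 + L2 s t * s0.
Proof. intros Hs HS Hb Hc.
 destruct (bounded_dir S s c0 s0 Hs HS Hb Hc) as [t1 [Ht1 [n1 X1]]].
 destruct (lexmax S s (fun t => ee s t c0 s0) (fun t => dd s t c0 s0)) as [ts [Hts [nts Hmax]]].
 { exists t1; auto. }
 set (es := ee s ts c0 s0) in *. set (ds := dd s ts c0 s0) in *.
 pose proof (T0_gt1 s ts Hs (HS ts Hts) nts) as T0s.
 assert (e1g: 1 < ee s t1 c0 s0).
 { pose proof (T0_gt1 s t1 Hs (HS t1 Ht1) n1). destruct (X_ee s t1 c0 s0 Hs (HS t1 Ht1) n1) as [x _].
   rewrite x in X1. nra. }
 assert (esg: 1 < es). { destruct (Hmax t1 Ht1 n1) as [h|[h _]]; lra. }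
 destruct (fin_delta pt S (fun t h => t <> s -> t <> ts -> ee s t c0 s0 + h * dd s t c0 s0 < es + h * ds)) as [eta [Heta Q]].
 { intros t Ht. destruct (pt_eq_dec t s) as [->|na]. exists 1; split; [lra|]; intros; congruence.
   destruct (pt_eq_dec t ts) as [->|nb]. exists 1; split; [lra|]; intros; congruence.
   destruct (Hmax t Ht na) as [lt|[eq le]].
   - set (b := dd s t c0 s0 - ds). exists ((es - ee s t c0 s0)/(Rabs b + 1)). pose proof (Rabs_pos b).
     split. apply Rdiv_lt_0_compat; lra. intros h [h0 h1] _ _.
     assert (h * (Rabs b + 1) < es - ee s t c0 s0).
     { apply lt_div_mul; lra. }
     pose proof (Rle_abs b). unfold b in *. nra.
   - destruct (Req_dec (dd s t c0 s0) ds) as [E|E].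
     + exfalso. apply nb. apply (ed_inj s t ts c0 s0); auto.
     + exists 1; split; [lra|]. intros h [h0 h1] _ _. assert (dd s t c0 s0 < ds) by lra. nra. }
 set (hm := Rmin (Rmin eta 1) (Rmin ((es*es-1)/(2*es*Rabs ds+2)) (es/(Rabs ds+1)))).
 pose proof (Rabs_pos ds) as ads. pose proof (Rle_abs ds) as ads1. pose proof (Rle_abs (-ds)) as ads2. rewrite Rabs_Ropp in ads2.
 assert (hm0: 0 < hm). { unfold hm. repeat apply Rmin_pos; try lra; apply Rdiv_lt_0_compat; nra. }
 assert (hm1: hm <= eta /\ hm <= 1 /\ hm <= (es*es-1)/(2*es*Rabs ds+2) /\ hm <= es/(Rabs ds+1)).
 { unfold hm. pose proof (Rmin_l (Rmin eta 1) (Rmin ((es*es-1)/(2*es*Rabs ds+2)) (es/(Rabs ds+1)))).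
   pose proof (Rmin_r (Rmin eta 1) (Rmin ((es*es-1)/(2*es*Rabs ds+2)) (es/(Rabs ds+1)))).
   pose proof (Rmin_l eta 1). pose proof (Rmin_r eta 1).
   pose proof (Rmin_l ((es*es-1)/(2*es*Rabs ds+2)) (es/(Rabs ds+1))). pose proof (Rmin_r ((es*es-1)/(2*es*Rabs ds+2)) (es/(Rabs ds+1))).
   lra. }
 assert (Hgen: forall h, 0 < h < hm ->
   0 < es + h*ds /\
   ((c0 - h*s0)/(es + h*ds))*((c0 - h*s0)/(es + h*ds)) + ((s0 + h*c0)/(es + h*ds))*((s0 + h*c0)/(es + h*ds)) < 1 /\
   gk s ts ((c0 - h*s0)/(es + h*ds)) ((s0 + h*c0)/(es + h*ds)) = 0 /\
   forall t, In t S -> t <> s -> t <> ts -> 0 < gk s t ((c0 - h*s0)/(es + h*ds)) ((s0 + h*c0)/(es + h*ds))).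
 { intros h Hh. destruct hm1 as [m1 [m2 [m3 m4]]].
   assert (mu0: 0 < es + h*ds).
   { assert (h * (Rabs ds + 1) < es). { apply Rlt_le_trans with (hm*(Rabs ds+1)). apply Rmult_lt_compat_r; lra.
       apply le_div_mul; lra. }
     nra. }
   split; auto. split.
   { assert (h * (2*es*Rabs ds + 2) < es*es - 1).
     { apply Rlt_le_trans with (hm*(2*es*Rabs ds+2)). apply Rmult_lt_compat_r; nra.
       apply le_div_mul; nra. }
     replace (((c0 - h*s0)/(es + h*ds))*((c0 - h*s0)/(es + h*ds)) + ((s0 + h*c0)/(es + h*ds))*((s0 + h*c0)/(es + h*ds)))
       with ((1 + h*h)/((es+h*ds)*(es+h*ds))).
     2:{ symmetry. transitivity (((c0 - h*s0)*(c0 - h*s0) + (s0 + h*c0)*(s0 + h*c0))/((es+h*ds)*(es+h*ds))). field; lra.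
         replace ((c0 - h*s0)*(c0 - h*s0) + (s0 + h*c0)*(s0 + h*c0)) with ((1+h*h)*(c0*c0+s0*s0)) by ring. rewrite Hc. f_equal; ring. }
     apply (Rmult_lt_reg_r ((es+h*ds)*(es+h*ds))). nra. unfold Rdiv. rewrite Rmult_assoc, Rinv_l; [| nra].
     assert (h*h <= h) by nra.
     assert (ds >= - Rabs ds) by lra.
     assert (es*h*ds >= es*h*(- Rabs ds)) by (apply Rle_ge, Rmult_le_compat_l; nra).
     assert (0 <= h*h*(ds*ds)) by nra.
     replace ((es + h*ds)*(es+h*ds)) with (es*es + 2*(es*h*ds) + h*h*(ds*ds)) by ring. nra. }
   split.
   - rewrite gk_dir; auto; try lra. fold es ds. field_simplify; lra.
   - intros t Ht n1' n2'. rewrite gk_dir; auto; try lra.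
     pose proof (T0_gt1 s t Hs (HS t Ht) n1'). pose proof (Q t Ht h (conj (proj1 Hh) (Rlt_le_trans _ _ _ (proj2 Hh) m1)) n1' n2').
     apply Rmult_lt_0_compat; [lra|].
     assert ((ee s t c0 s0 + h * dd s t c0 s0) / (es + h * ds) < 1).
     { apply (Rmult_lt_reg_r (es + h*ds)); auto. unfold Rdiv. rewrite Rmult_assoc, Rinv_l; lra. }
     lra. }
 destruct (Hgen (hm/3)) as [p1 [q1 [r1 s1]]]. lra.
 destruct (Hgen (2*hm/3)) as [p2 [q2 [r2 s2]]]. lra.
 exists ts. split; auto. split.
 - apply (adj_chord S s ts _ _ _ _ Hs HS Hts nts q1 q2); auto.
   destruct (Req_dec ((c0 - hm/3*s0)/(es + hm/3*ds)) ((c0 - 2*hm/3*s0)/(es + 2*hm/3*ds))) as [E1|E1]; [|auto].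
   destruct (Req_dec ((s0 + hm/3*c0)/(es + hm/3*ds)) ((s0 + 2*hm/3*c0)/(es + 2*hm/3*ds))) as [E2|E2]; [|auto].
   exfalso.
   destruct (AB c0 s0 (hm/3) (es + hm/3*ds) Hc) as [A1 B1]. lra.
   destruct (AB c0 s0 (2*hm/3) (es + 2*hm/3*ds) Hc) as [A2 B2]. lra.
   rewrite E1, E2, A2 in A1. rewrite E1, E2, B2 in B1.
   assert (es + hm/3*ds = es + 2*hm/3*ds).
   { assert (I: / (es + hm/3*ds) = / (es + 2*hm/3*ds)) by (unfold Rdiv in A1; lra).
     rewrite <- (Rinv_inv (es + hm/3*ds)), I, Rinv_inv; auto. }
   rewrite <- H in B1. unfold Rdiv in B1. apply Rmult_eq_reg_r in B1; [lra|]. apply Rinv_neq_0_compat; lra.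
 - destruct (X_ee s ts c0 s0 Hs (HS ts Hts) nts) as [x _]. rewrite x. fold es. nra.
Qed.


Lemma sin_lb3 x : 0 <= x -> x <= 2 -> x - x*x*x/6 <= sin x.
Proof. intros. assert (x <= PI) by (pose proof PI2_3_2; lra). destruct (SIN x H H1) as [H2 _].
 unfold sin_lb, sin_approx, sin_term in H2. simpl in H2.
 unfold INR in H2. simpl in H2.
 assert (x*x*x*x*x/120 - x*x*x*x*x*x*x/5040 >= 0).
 { assert (0 <= x*x*x*x*x) by (repeat apply Rmult_le_pos; lra).
   assert (x*x <= 4) by nra.
   assert (x*x*x*x*x*x*x = (x*x*x*x*x)*(x*x)) by ring. nra. }
 lra.
Qed.

Lemma sin_big M E : 2 <= M -> M < E -> 2*E/(E*E+1) < sin (2*PI/(3*M)).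
Proof. intros HM HE. pose proof PI2_3_2. pose proof PI_4.
 set (x := 2*PI/(3*M)). set (y0 := 2/M).
 assert (x*(3*M) = 2*PI) by (unfold x; field; lra).
 assert (y0*M = 2) by (unfold y0; field; lra).
 assert (y0 < x) by nra. assert (0 < y0) by nra. assert (x <= 4/3) by nra. assert (y0 <= 1) by nra.
 pose proof (sin_lb3 x ltac:(lra) ltac:(lra)).
 assert (Ey0: y0 = 2/M) by reflexivity. clearbody x y0.
 assert (y0 - y0*y0*y0/6 < x - x*x*x/6).
 { assert (x*x + x*y0 + y0*y0 < 6) by nra.
   assert (x - x*x*x/6 - (y0 - y0*y0*y0/6) = (x - y0)*(1 - (x*x+x*y0+y0*y0)/6)) by field.
   assert (0 < (x - y0)*(1 - (x*x+x*y0+y0*y0)/6)) by (apply Rmult_lt_0_compat; lra). lra. }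
 assert (2*M/(M*M+1) < y0 - y0*y0*y0/6).
 { rewrite Ey0. apply Rminus_gt_0_lt.
   replace (2 / M - 2 / M * (2 / M) * (2 / M) / 6 - 2 * M / (M * M + 1)) with ((2*M*M - 4)/(3*M*M*M*(M*M+1))) by (field; nra).
   apply Rdiv_lt_0_compat. nra. repeat apply Rmult_lt_0_compat; nra. }
 assert (2*E/(E*E+1) < 2*M/(M*M+1)).
 { apply Rminus_gt_0_lt.
   replace (2 * M / (M * M + 1) - 2 * E / (E * E + 1)) with (2*(E-M)*(E*M-1)/((M*M+1)*(E*E+1))) by (field; nra).
   apply Rdiv_lt_0_compat. repeat apply Rmult_lt_0_compat; nra. apply Rmult_lt_0_compat; nra. }
 lra.
Qed.

Lemma cos_far_aux D N : 0 < N -> 2 <= D -> 2*D <= N -> cos (2*PI*D/N) <= cos (4*PI/N).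
Proof. intros. pose proof PI_RGT_0.
 assert (4*PI/N <= 2*PI*D/N). { unfold Rdiv. apply Rmult_le_compat_r. left; apply Rinv_0_lt_compat; lra. nra. }
 assert (2*PI*D/N <= PI). { apply (Rmult_le_reg_r N); auto. unfold Rdiv. rewrite Rmult_assoc, Rinv_l; nra. }
 assert (0 <= 4*PI/N) by (apply Rle_mult_inv_pos; lra).
 destruct H3. left; apply cos_decreasing_1; lra. rewrite H3; lra.
Qed.

Lemma cos_far (N j k : nat) : (j < N)%nat -> (k + 2 <= j)%nat -> (j + 2 <= k + N)%nat ->
  cos (2*PI*INR j/INR N) * cos (2*PI*INR k/INR N) + sin (2*PI*INR j/INR N) * sin (2*PI*INR k/INR N) <= cos (4*PI/INR N).
Proof. intros. rewrite <- cos_minus.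
 assert (0 < INR N) by (apply lt_0_INR; lia).
 replace (2*PI*INR j/INR N - 2*PI*INR k/INR N) with (2*PI*INR (j-k)/INR N) by (rewrite minus_INR by lia; field; lra).
 destruct (Compare_dec.le_lt_dec (2*(j-k)) N).
 - apply cos_far_aux; auto. replace 2 with (INR 2) by (simpl; lra). apply le_INR; lia.
   replace 2 with (INR 2) by (simpl; lra). rewrite <- mult_INR. apply le_INR; lia.
 - replace (2*PI*INR (j-k)/INR N) with (2*PI - 2*PI*INR (N-(j-k))/INR N) by (rewrite minus_INR by lia; field; lra).
   rewrite cos_minus, cos_2PI, sin_2PI. replace (1 * cos (2 * PI * INR (N - (j - k)) / INR N) + 0 * sin (2 * PI * INR (N - (j - k)) / INR N)) with (cos (2 * PI * INR (N - (j - k)) / INR N)) by ring.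
   apply cos_far_aux; auto. replace 2 with (INR 2) by (simpl; lra). apply le_INR; lia.
   replace 2 with (INR 2) by (simpl; lra). rewrite <- mult_INR. apply le_INR; lia.
Qed.

Lemma pair_cover T0 T1 T2 c0 s0 c1 s1 : 1 < T0 -> T0*T0 - T1*T1 - T2*T2 = 1 -> c0*c0+s0*s0 = 1 -> c1*c1+s1*s1 = 1 ->
  T0 - 1 <= T1*c0+T2*s0 -> T0 - 1 <= T1*c1+T2*s1 -> (T0-3)/(T0+1) <= c0*c1+s0*s1.
Proof. intros. set (p := T1*c0+T2*s0) in *. set (p' := T1*c1+T2*s1) in *.
 set (q := T1*s0 - T2*c0). set (q' := T1*s1 - T2*c1).
 assert (I: (T1*T1+T2*T2)*(c0*c1+s0*s1) = p*p' + q*q') by (unfold p,p',q,q'; ring).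
 assert (I0: p*p + q*q = T1*T1+T2*T2) by (unfold p,q; transitivity ((T1*T1+T2*T2)*(c0*c0+s0*s0)); [ring| rewrite H1; ring]).
 assert (I1: p'*p' + q'*q' = T1*T1+T2*T2) by (unfold p',q'; transitivity ((T1*T1+T2*T2)*(c1*c1+s1*s1)); [ring| rewrite H2; ring]).
 assert (T1*T1+T2*T2 = (T0-1)*(T0+1)) by lra.
 pose proof (Rle_0_sqr (q+q')). unfold Rsqr in H6.
 assert ((q+q')*(q+q') = q*q + 2*(q*q') + q'*q') by ring.
 assert (q*q' >= -(q*q+q'*q')/2) by lra.
 assert (p+p' >= 2*(T0-1)) by lra.
 assert ((p+p')*(p+p') >= 4*(T0-1)*(T0-1)) by nra.
 assert ((p+p')*(p+p') = p*p + 2*(p*p') + p'*p') by ring.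
 assert ((T0-1)*(T0+1)*(c0*c1+s0*s1) >= (T0-1)*(T0-3)).
 { rewrite <- H5, I. replace ((T0-1)*(T0-3)) with (2*(T0-1)*(T0-1) - (T0-1)*(T0+1)) by ring. lra. }
 apply (Rmult_le_reg_l ((T0-1)*(T0+1))). nra.
 replace ((T0-1)*(T0+1)*((T0-3)/(T0+1))) with ((T0-1)*(T0-3)) by (field; lra). lra.
Qed.

Lemma filter_len (A : Type) (f : A -> bool) (l : list A) :
  (length (filter f l) + length (filter (fun x => negb (f x)) l) = length l)%nat.
Proof. induction l; simpl; auto. destruct (f a); simpl; lia. Qed.

Lemma count_cover (A : Type) (L : list A) (Pr : nat -> A -> Prop) (dec : forall j t, {Pr j t} + {~ Pr j t}) :
  forall J : list nat, NoDup J -> (forall j, In j J -> exists t, In t L /\ Pr j t) ->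
  (forall t j1 j2 j3, In t L -> In j1 J -> In j2 J -> In j3 J -> j1 <> j2 -> j1 <> j3 -> j2 <> j3 ->
     Pr j1 t -> Pr j2 t -> Pr j3 t -> False) ->
  (length J <= 2 * length L)%nat.
Proof. induction L as [|t L IH]; intros J ND Cov N3.
 - destruct J as [|j J]; simpl; [lia|]. destruct (Cov j (or_introl eq_refl)) as [t [[] _]].
 - set (f := fun j => if dec j t then true else false).
   pose proof (filter_len nat f J) as FL.
   assert (L1: (length (filter f J) <= 2)%nat).
   { assert (ND1: NoDup (filter f J)) by (apply NoDup_filter; auto).
     assert (P1: forall j, In j (filter f J) -> In j J /\ Pr j t).
     { intros j Hj. apply filter_In in Hj. destruct Hj. unfold f in H0. destruct (dec j t); [auto|discriminate]. }
     destruct (filter f J) as [|a [|b [|c rest]]]; simpl; try lia.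
     exfalso. apply NoDup_cons_iff in ND1. destruct ND1 as [na ND2].
     apply NoDup_cons_iff in ND2. destruct ND2 as [nb _].
     destruct (P1 a (or_introl eq_refl)). destruct (P1 b (or_intror (or_introl eq_refl))).
     destruct (P1 c (or_intror (or_intror (or_introl eq_refl)))).
     apply (N3 t a b c (or_introl eq_refl)); auto.
     intros E; apply na; rewrite E; simpl; auto. intros E; apply na; rewrite E; simpl; auto.
     intros E; apply nb; rewrite E; simpl; auto. }
   assert (L2: (length (filter (fun x => negb (f x)) J) <= 2 * length L)%nat).
   { apply IH. apply NoDup_filter; auto.
     intros j Hj. apply filter_In in Hj. destruct Hj. unfold f in H0. destruct (dec j t); [discriminate|].
     destruct (Cov j H) as [t' [[<-|Ht'] Hp]]; [contradiction|]. exists t'; auto.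
     intros t' j1 j2 j3 Ht' H1 H2 H3. apply filter_In in H1, H2, H3.
     apply (N3 t' j1 j2 j3); simpl; tauto. }
   simpl. lia.
Qed.


Lemma key_ineq T0 E sg : 0 < E -> (E*E + /(E*E))/2 <= T0 -> 2*E/(E*E+1) < sg -> 1 - 2*sg*sg < (T0-3)/(T0+1).
Proof. intros HE HT Hs.
 assert (0 < 2*E/(E*E+1)) by (apply Rdiv_lt_0_compat; nra).
 set (w := 2*E/(E*E+1)) in *.
 assert (w*w < sg*sg) by nra.
 assert (Ew: w*w = 4*(E*E)/((E*E+1)*(E*E+1))) by (unfold w; field; nra).
 assert (T0 + 1 >= (E*E+1)*(E*E+1)/(2*(E*E))).
 { replace ((E*E+1)*(E*E+1)/(2*(E*E))) with ((E*E + /(E*E))/2 + 1) by (field; nra). lra. }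
 assert (0 < T0 + 1) by (assert (0 < (E*E+1)*(E*E+1)/(2*(E*E))) by (apply Rdiv_lt_0_compat; nra); lra).
 assert ((T0-3)/(T0+1) = 1 - 4/(T0+1)) by (field; lra). rewrite H3.
 assert (4/(T0+1) <= 2*(w*w)).
 { rewrite Ew. apply (Rmult_le_reg_r (T0+1)); auto. unfold Rdiv. rewrite Rmult_assoc, Rinv_l; [|lra].
   apply (Rmult_le_reg_r ((E*E+1)*(E*E+1))). nra.
   replace (2 * (4 * (E * E) * / ((E * E + 1) * (E * E + 1))) * (T0 + 1) * ((E * E + 1) * (E * E + 1))) with (8*(E*E)*(T0+1)) by (field; nra).
   assert ((T0+1)*(2*(E*E)) >= (E*E+1)*(E*E+1)).
   { apply Rle_ge. apply (Rmult_le_reg_r (/(2*(E*E)))). apply Rinv_0_lt_compat; nra.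
     replace ((T0+1)*(2*(E*E))*/(2*(E*E))) with (T0+1) by (field; nra). unfold Rdiv in H1. lra. }
   nra. }
 lra.
Qed.

Lemma near_idx (N a b : nat) (B : R) : (a < N)%nat -> (b < N)%nat ->
  cos (4*PI/INR N) < B ->
  B <= cos (2*PI*INR a/INR N) * cos (2*PI*INR b/INR N) + sin (2*PI*INR a/INR N) * sin (2*PI*INR b/INR N) ->
  ~ ((b + 2 <= a)%nat /\ (a + 2 <= b + N)%nat) /\ ~ ((a + 2 <= b)%nat /\ (b + 2 <= a + N)%nat).
Proof. intros. split; intros [h1 h2].
 pose proof (cos_far N a b H h1 h2). lra.
 pose proof (cos_far N b a H0 h1 h2). lra.
Qed.

Theorem lemma12 (r : R) (S : list pt) :
  0 < r ->
  NoDup S ->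
  (forall s, In s S -> inH s) ->
  (forall s t, In s S -> In t S -> s <> t -> 2 * r <= hdist s t) ->
  forall s, In s S -> bounded_cell S s ->
  forall L : list pt, NoDup L ->
    (forall t, In t L <-> (In t S /\ delaunay_adj S s t)) ->
    exp r <= INR (length L).
Proof.
 intros Hr ND HS Hsep s Hs Hb L NDL HL.
 pose proof (HS s Hs) as HsH.
 destruct (Rle_lt_dec (exp r) (INR (length L))) as [ok|lt]; [exact ok| exfalso].
 set (E := exp r) in *. assert (E0: 0 < E) by apply exp_pos.
 assert (Cov: forall c0 s0, c0*c0 + s0*s0 = 1 -> exists t, In t L /\ L0 s t - 1 <= L1 s t * c0 + L2 s t * s0).
 { intros c0 s0 Hc. destruct (dir_cover S s c0 s0 HsH HS Hb Hc) as [t [Ht [Ha Hx]]].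
   exists t; split; auto. apply HL; auto. }
 assert (Fac: forall t, In t L -> inH t /\ 1 < L0 s t /\ L0 s t * L0 s t - L1 s t * L1 s t - L2 s t * L2 s t = 1 /\
    (E*E + /(E*E))/2 <= L0 s t).
 { intros t Ht. apply HL in Ht. destruct Ht as [Ht [Hst _]].
   pose proof (HS t Ht). split; auto. split. apply T0_gt1; auto. split. apply H_norm; auto.
   pose proof (Hsep s t Hs Ht Hst). rewrite hdist_hd, Cf_sym in H0.
   apply hd_ge_2r in H0; auto. 2: apply Cf_ge1; auto.
   replace (exp (2*r)) with (E*E) in H0 by (unfold E; rewrite <- exp_plus; f_equal; ring). exact H0. }
 destruct L as [|t0 [|t1 L']].
 - destruct (Cov 1 0) as [t [[] _]]. lra.
 - destruct (Cov 1 0) as [t [[<-|[]] H1]]. lra.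
   destruct (Cov (-1) 0) as [t [[<-|[]] H2]]. lra.
   destruct (Fac t0 (or_introl eq_refl)) as [_ [T0 _]]. lra.
 - set (L := t0 :: t1 :: L') in *.
   set (m := length L) in *. assert (m2: (2 <= m)%nat) by (unfold m, L; simpl; lia).
   set (N := (3 * m)%nat).
   assert (INR N = 3 * INR m) by (unfold N; rewrite mult_INR; simpl; lra).
   assert (Mg: 2 <= INR m) by (replace 2 with (INR 2) by (simpl; lra); apply le_INR; auto).
   assert (0 < INR N) by lra.
   set (th := fun j : nat => 2*PI*INR j/INR N).
   pose proof (sin_big (INR m) E Mg lt) as SB.
   assert (SN: sin (2*PI/(3*INR m)) = sin (2*PI/INR N)) by (rewrite H; auto).
   rewrite SN in SB.
   assert (CN: cos (4*PI/INR N) = 1 - 2 * sin (2*PI/INR N) * sin (2*PI/INR N)).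
   { rewrite <- cos_2a_sin. f_equal. field. lra. }
   assert (Cnt: (length (seq 0 N) <= 2 * length L)%nat).
   { apply (count_cover pt L (fun j t => L0 s t - 1 <= L1 s t * cos (th j) + L2 s t * sin (th j))).
     - intros j t. apply Rle_dec.
     - apply seq_NoDup.
     - intros j _. apply Cov. pose proof (sin2_cos2 (th j)). unfold Rsqr in H1. lra.
     - intros t j1 j2 j3 Ht I1 I2 I3 n12 n13 n23 P1 P2 P3.
       apply in_seq in I1. apply in_seq in I2. apply in_seq in I3.
       destruct (Fac t Ht) as [Ht' [T0g [Tn Tb]]].
       assert (Kb: cos (4*PI/INR N) < (L0 s t - 3)/(L0 s t + 1)) by (rewrite CN; apply (key_ineq _ E); auto).
       assert (Pc: forall a b, L0 s t - 1 <= L1 s t * cos (th a) + L2 s t * sin (th a) ->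
                  L0 s t - 1 <= L1 s t * cos (th b) + L2 s t * sin (th b) ->
                  (L0 s t - 3)/(L0 s t + 1) <= cos (th a) * cos (th b) + sin (th a) * sin (th b)).
       { intros a b Pa Pb. apply (pair_cover (L0 s t) (L1 s t) (L2 s t)); auto.
         pose proof (sin2_cos2 (th a)); unfold Rsqr in *; lra.
         pose proof (sin2_cos2 (th b)); unfold Rsqr in *; lra. }
       destruct (near_idx N j1 j2 _ ltac:(lia) ltac:(lia) Kb (Pc j1 j2 P1 P2)).
       destruct (near_idx N j1 j3 _ ltac:(lia) ltac:(lia) Kb (Pc j1 j3 P1 P3)).
       destruct (near_idx N j2 j3 _ ltac:(lia) ltac:(lia) Kb (Pc j2 j3 P2 P3)).
       unfold N in *. lia. }
   rewrite seq_length in Cnt. fold m in Cnt. unfold N in Cnt. lia.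
Qed.
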